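(* Let $(a_n)_{n\in\mathbb{N}}$ be a sequence of real numbers with $a_1>a_2>\cdots>a_n>a_{n+1}>\cdots\ge 0$, and let $\alpha\ge0$ be its limit. Consider the statements: (i) $\alpha=0$; (ii) for every integer $k\ge0$ and every $\varepsilon>0$ there exists $\delta>0$ such that for all $n\in\mathbb{N}$, $a_n<\varepsilon+\delta$ implies $a_{n+k}\le\varepsilon$; (iii) for every integer $k\ge1$ and every $\varepsilon>0$ there exists $\delta>0$ such that for all $n\in\mathbb{N}$, $\frac{1}{2}(a_n+a_{n+1})<\varepsilon+\delta$ implies $a_{n+k}\le\varepsilon$; (iv) for every $\varepsilon\in(0,\infty)\setminus\{a_k : k\in\mathbb{N}\}$ there exists $\delta>0$ such that for all $m,n\in\mathbb{N}$, $a_m+a_n<\varepsilon+\delta$ implies $a_m+a_n\le\varepsilon$; (v) for every $\varepsilon>0$ there exists $\delta>0$ such that for all $m,n\in\mathbb{N}$, $a_m+a_n<\varepsilon+\delta$ implies $a_m+a_n\le\varepsilon$. Then (i), (ii), (iii), (iv) are equivalent; moreover (v) implies (i), but (i) does not imply (v).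
   Context: $\mathbb{N}=\{1,2,3,\dots\}$. *)

(* Defs.v *)
(* concrete reals R. Sequences a : nat -> R; only indices n >= 1
   are used, matching N = {1,2,3,...}; the value a 0 is irrelevant. *)
From Stdlib Require Export Reals.
Open Scope R_scope.

Definition strict_dec_nonneg (a : nat -> R) : Prop :=
  (forall n : nat, (1 <= n)%nat -> a (S n) < a n) /\
  (forall n : nat, (1 <= n)%nat -> 0 <= a n).

Definition is_limit (a : nat -> R) (alpha : R) : Prop :=
  forall eps : R, eps > 0 -> exists N : nat, forall n : nat,
    (N <= n)%nat -> (1 <= n)%nat -> Rabs (a n - alpha) < eps.

Definition cond_i (alpha : R) : Prop := alpha = 0.

Definition cond_ii (a : nat -> R) : Prop :=
  forall (k : nat) (eps : R), eps > 0 -> exists delta : R, delta > 0 /\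
    forall n : nat, (1 <= n)%nat -> a n < eps + delta -> a (n + k)%nat <= eps.

Definition cond_iii (a : nat -> R) : Prop :=
  forall (k : nat) (eps : R), (1 <= k)%nat -> eps > 0 -> exists delta : R, delta > 0 /\
    forall n : nat, (1 <= n)%nat -> (a n + a (S n)) / 2 < eps + delta ->
      a (n + k)%nat <= eps.

Definition cond_iv (a : nat -> R) : Prop :=
  forall eps : R, eps > 0 -> (forall k : nat, (1 <= k)%nat -> eps <> a k) ->
    exists delta : R, delta > 0 /\
    forall m n : nat, (1 <= m)%nat -> (1 <= n)%nat ->
      a m + a n < eps + delta -> a m + a n <= eps.

Definition cond_v (a : nat -> R) : Prop :=
  forall eps : R, eps > 0 ->
    exists delta : R, delta > 0 /\
    forall m n : nat, (1 <= m)%nat -> (1 <= n)%nat ->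
      a m + a n < eps + delta -> a m + a n <= eps.

(* Main.v *)
Require Import Defs.
From Stdlib Require Import Reals Lra Lia Arith.
Open Scope R_scope.

Fixpoint minN (f : nat -> R) (N : nat) : R :=
  match N with O => f O | S N' => Rmin (minN f N') (f (S N')) end.

Lemma minN_le f N k : (k <= N)%nat -> minN f N <= f k.
Proof.
  induction N as [|N IH]; intros Hk; simpl.
  - assert (k = 0%nat) by lia; subst; lra.
  - destruct (Nat.eq_dec k (S N)) as [->|Hne].
    + apply Rmin_r.
    + eapply Rle_trans; [apply Rmin_l|]. apply IH; lia.
Qed.

Lemma minN_pos f N : (forall k, 0 < f k) -> 0 < minN f N.
Proof.
  intros H; induction N as [|N IH]; simpl; [apply H|].
  apply Rmin_glb_lt; auto.
Qed.

Lemma mono a : strict_dec_nonneg a -> forall i j, (1 <= i)%nat -> (i <= j)%nat -> a j <= a i.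
Proof.
  intros [Hd _] i j Hi Hij; induction Hij; [lra|].
  specialize (Hd m ltac:(lia)); lra.
Qed.

Lemma lim_le a alpha : strict_dec_nonneg a -> is_limit a alpha ->
  forall j, (1 <= j)%nat -> alpha <= a j.
Proof.
  intros Hd Hl j Hj. destruct (Rle_dec alpha (a j)) as [H|H]; auto.
  exfalso. destruct (Hl (alpha - a j) ltac:(lra)) as [N HN].
  specialize (HN (Nat.max N j) ltac:(lia) ltac:(lia)).
  pose proof (mono a Hd j (Nat.max N j) Hj ltac:(lia)).
  unfold Rabs in HN; destruct Rcase_abs in HN; lra.
Qed.

Lemma lim_lt a alpha : strict_dec_nonneg a -> is_limit a alpha ->
  forall j, (1 <= j)%nat -> alpha < a j.
Proof.
  intros Hd Hl j Hj. pose proof (lim_le a alpha Hd Hl (S j) ltac:(lia)).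
  destruct Hd as [Hd _]; specialize (Hd j Hj); lra.
Qed.

Lemma lim_nonneg a alpha : strict_dec_nonneg a -> is_limit a alpha -> 0 <= alpha.
Proof.
  intros Hd Hl. destruct (Rle_dec 0 alpha) as [H|H]; auto. exfalso.
  destruct (Hl (- alpha) ltac:(lra)) as [N HN].
  specialize (HN (Nat.max N 1) ltac:(lia) ltac:(lia)).
  destruct Hd as [_ Hn]; specialize (Hn (Nat.max N 1) ltac:(lia)).
  unfold Rabs in HN; destruct Rcase_abs in HN; lra.
Qed.

Lemma eventually a alpha : is_limit a alpha -> forall t, alpha < t ->
  exists N, forall k, (N <= k)%nat -> (1 <= k)%nat -> a k < t.
Proof.
  intros Hl t Ht. destruct (Hl (t - alpha) ltac:(lra)) as [N HN].
  exists N; intros k Hk Hk1; specialize (HN k Hk Hk1).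
  unfold Rabs in HN; destruct Rcase_abs in HN; lra.
Qed.

Lemma near a alpha : is_limit a alpha -> forall d, d > 0 ->
  exists n, (1 <= n)%nat /\ a n < alpha + d.
Proof.
  intros Hl d Hd. destruct (Hl d Hd) as [N HN].
  exists (Nat.max N 1); split; [lia|].
  specialize (HN (Nat.max N 1) ltac:(lia) ltac:(lia)).
  unfold Rabs in HN; destruct Rcase_abs in HN; lra.
Qed.

Lemma i_ii a : strict_dec_nonneg a -> is_limit a 0 -> cond_ii a.
Proof.
  intros Hd Hl k eps Heps.
  destruct (eventually a 0 Hl eps Heps) as [N HN].
  set (f := fun n => if Rlt_dec eps (a n) then a n - eps else 1).
  assert (Hf : forall n, 0 < f n).
  { intro n; unfold f; destruct Rlt_dec; lra. }
  exists (minN f N); split; [apply minN_pos; auto|].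
  intros n Hn Han. destruct (Rle_dec (a (n + k)%nat) eps) as [H|H]; auto.
  exfalso. pose proof (mono a Hd n (n + k) Hn ltac:(lia)).
  destruct (le_lt_dec N n) as [HNn|HNn].
  - specialize (HN n HNn Hn); lra.
  - pose proof (minN_le f N n ltac:(lia)). unfold f in *.
    destruct Rlt_dec; lra.
Qed.

Lemma ii_i a alpha : strict_dec_nonneg a -> is_limit a alpha -> cond_ii a -> alpha = 0.
Proof.
  intros Hd Hl H. pose proof (lim_nonneg a alpha Hd Hl).
  destruct (Req_dec alpha 0) as [E|E]; auto. exfalso.
  destruct (H 0%nat alpha ltac:(lra)) as [d [Hdp Hd']].
  destruct (near a alpha Hl d Hdp) as [n [Hn Han]].
  specialize (Hd' n Hn Han). rewrite Nat.add_0_r in Hd'.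
  pose proof (lim_lt a alpha Hd Hl n Hn); lra.
Qed.

Lemma i_iii a : strict_dec_nonneg a -> is_limit a 0 -> cond_iii a.
Proof.
  intros Hd Hl k eps Hk Heps.
  destruct (i_ii a Hd Hl (k - 1)%nat eps Heps) as [d [Hdp Hd']].
  exists d; split; auto. intros n Hn Hs.
  pose proof (proj1 Hd n Hn).
  replace (n + k)%nat with (S n + (k - 1))%nat by lia.
  apply Hd'; [lia|lra].
Qed.

Lemma iii_i a alpha : strict_dec_nonneg a -> is_limit a alpha -> cond_iii a -> alpha = 0.
Proof.
  intros Hd Hl H. pose proof (lim_nonneg a alpha Hd Hl).
  destruct (Req_dec alpha 0) as [E|E]; auto. exfalso.
  destruct (H 1%nat alpha ltac:(lia) ltac:(lra)) as [d [Hdp Hd']].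
  destruct (near a alpha Hl d Hdp) as [n [Hn Han]].
  pose proof (proj1 Hd n Hn).
  pose proof (lim_lt a alpha Hd Hl (n + 1) ltac:(lia)).
  assert (a (n + 1)%nat <= alpha) by (apply Hd'; [auto|]; lra).
  lra.
Qed.

Lemma i_iv a : strict_dec_nonneg a -> is_limit a 0 -> cond_iv a.
Proof.
  intros Hd Hl eps Heps Hne.
  destruct (eventually a 0 Hl (eps / 2) ltac:(lra)) as [N1 HN1].
  set (g := fun k => match k with O => 1 | _ => Rabs (a k - eps) end).
  assert (Hg : forall k, 0 < g k).
  { intros [|k]; simpl; [lra|]. apply Rabs_pos_lt.
    specialize (Hne (S k) ltac:(lia)); lra. }
  set (h := Rmin (eps / 2) (minN g N1)).
  assert (Hh : 0 < h) by (apply Rmin_glb_lt; [lra|apply minN_pos; auto]).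
  assert (Hsep : forall k, (1 <= k)%nat -> a k >= eps + h \/ a k <= eps - h).
  { intros k Hk.
    assert (Rabs (a k - eps) >= h).
    { destruct (le_lt_dec N1 k) as [Hk'|Hk'].
      - specialize (HN1 k Hk' Hk). pose proof (Rmin_l (eps/2) (minN g N1)).
        fold h in H. unfold Rabs; destruct Rcase_abs; lra.
      - pose proof (minN_le g N1 k ltac:(lia)).
        pose proof (Rmin_r (eps/2) (minN g N1)). fold h in H0.
        destruct k as [|k]; [lia|]. simpl in H. lra. }
    unfold Rabs in H; destruct Rcase_abs in H; lra. }
  destruct (eventually a 0 Hl h Hh) as [N2 HN2].
  set (D := fun m n => if Rlt_dec eps (a m + a n) then a m + a n - eps else 1).
  assert (HD : forall m n, 0 < D m n) by (intros; unfold D; destruct Rlt_dec; lra).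
  set (G := minN (fun m => minN (D m) N2) N2).
  assert (HG : 0 < G) by (apply minN_pos; intro; apply minN_pos; auto).
  exists (Rmin h G); split; [apply Rmin_glb_lt; auto|].
  intros m n Hm Hn Hs.
  pose proof (Rmin_l h G); pose proof (Rmin_r h G).
  destruct (Rle_dec (a m + a n) eps) as [E|E]; auto. exfalso.
  pose proof (proj2 Hd m Hm); pose proof (proj2 Hd n Hn).
  destruct (Hsep m Hm) as [Am|Am]; [lra|].
  destruct (Hsep n Hn) as [An|An]; [lra|].
  assert (m < N2)%nat.
  { destruct (le_lt_dec N2 m) as [L|L]; auto. specialize (HN2 m L Hm); lra. }
  assert (n < N2)%nat.
  { destruct (le_lt_dec N2 n) as [L|L]; auto. specialize (HN2 n L Hn); lra. }
  pose proof (minN_le (fun m => minN (D m) N2) N2 m ltac:(lia)). simpl in H5.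
  pose proof (minN_le (D m) N2 n ltac:(lia)).
  fold G in H5. assert (D m n = a m + a n - eps) by (unfold D; destruct Rlt_dec; lra). lra.
Qed.

Lemma iv_i a alpha : strict_dec_nonneg a -> is_limit a alpha -> cond_iv a -> alpha = 0.
Proof.
  intros Hd Hl H. pose proof (lim_nonneg a alpha Hd Hl).
  destruct (Req_dec alpha 0) as [E|E]; auto. exfalso.
  set (v := 2 * alpha).
  destruct (eventually a alpha Hl v ltac:(unfold v; lra)) as [N HN].
  set (f := fun k => if Rlt_dec v (a k) then a k - v else 1).
  assert (Hf : forall k, 0 < f k) by (intro; unfold f; destruct Rlt_dec; lra).
  set (eta := minN f N).
  assert (Heta : 0 < eta) by (apply minN_pos; auto).
  assert (Hav : forall x, v < x < v + eta -> forall k, (1 <= k)%nat -> x <> a k).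
  { intros x Hx k Hk.
    destruct (Rlt_dec v (a k)) as [L|L]; [|lra].
    destruct (le_lt_dec N k) as [Hk'|Hk'].
    - specialize (HN k Hk' Hk); lra.
    - pose proof (minN_le f N k ltac:(lia)) as M. fold eta in M.
      assert (f k = a k - v) by (unfold f; destruct Rlt_dec; lra). lra. }
  destruct (near a alpha Hl eta Heta) as [j [Hj Haj]].
  pose proof (lim_lt a alpha Hd Hl j Hj).
  destruct (H (alpha + a j) ltac:(lra)) as [d [Hdp Hd']].
  { intros k Hk. apply Hav; auto. unfold v; lra. }
  destruct (near a alpha Hl d Hdp) as [n [Hn Han]].
  pose proof (lim_lt a alpha Hd Hl n Hn).
  specialize (Hd' j n Hj Hn ltac:(lra)). lra.
Qed.

Lemma v_iv a : cond_v a -> cond_iv a.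
Proof. intros H eps He _; apply H; auto. Qed.

Theorem lemma5p1 :
  (forall (a : nat -> R) (alpha : R),
     strict_dec_nonneg a -> is_limit a alpha ->
     (cond_i alpha <-> cond_ii a) /\
     (cond_i alpha <-> cond_iii a) /\
     (cond_i alpha <-> cond_iv a) /\
     (cond_v a -> cond_i alpha)) /\
  (exists (a : nat -> R) (alpha : R),
     strict_dec_nonneg a /\ is_limit a alpha /\ cond_i alpha /\ ~ cond_v a).
Proof.
  split.
  - intros a alpha Hd Hl. unfold cond_i.
    split; [split; [intros ->; apply i_ii; auto | apply ii_i; auto]|].
    split; [split; [intros ->; apply i_iii; auto | apply iii_i; auto]|].
    split; [split; [intros ->; apply i_iv; auto | apply iv_i; auto]|].
    intros Hv; apply (iv_i a alpha); auto; apply v_iv; auto.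
  - exists (fun n => / INR n), 0.
    assert (Hpos : forall n, (1 <= n)%nat -> 0 < INR n).
    { intros n Hn; apply lt_0_INR; lia. }
    split; [split|split; [|split; [reflexivity|]]].
    + intros n Hn. apply Rinv_lt_contravar.
      * apply Rmult_lt_0_compat; apply Hpos; lia.
      * rewrite S_INR; lra.
    + intros n Hn; left; apply Rinv_0_lt_compat, Hpos; auto.
    + intros eps He. destruct (archimed_cor1 eps He) as [N [HN HN0]].
      exists N; intros n Hn Hn1. rewrite Rminus_0_r.
      pose proof (Hpos n Hn1) as Pn. pose proof (Hpos N ltac:(lia)) as PN.
      rewrite Rabs_right by (left; apply Rinv_0_lt_compat; auto).
      apply Rle_lt_trans with (/ INR N); auto.
      apply Rinv_le_contravar; auto. apply le_INR; auto.
    + intros Hv. destruct (Hv 1 ltac:(lra)) as [d [Hdp Hd']].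
      destruct (archimed_cor1 d Hdp) as [N [HN HN0]].
      pose proof (Hpos N ltac:(lia)) as PN.
      specialize (Hd' 1%nat N ltac:(lia) ltac:(lia)). simpl in Hd'.
      rewrite Rinv_1 in Hd'.
      assert (0 < / INR N) by (apply Rinv_0_lt_compat; auto).
      lra.
Qed.
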